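(* Let $0<\epsilon<1$, $0<\rho<1$ and integers $n\ge k\ge 1$. If $\mathbf{A}$ is a random $n\times k$ binary matrix with the Bernoulli$(n,k,\rho)$ distribution, then \[ \mathbb{E}_{\mathbf{A}}\big(p_c(\mathbf{A})\big)\;\ge\;\sum_{i=0}^{n}\binom{n}{i}\frac{2^n\,\epsilon^{2i}(1-\epsilon)^{2(n-i)}}{\sum_{j=0}^{k}\binom{k}{j}\big(1-(1-2\epsilon)(1-2\rho)^j\big)^i\big(1+(1-2\epsilon)(1-2\rho)^j\big)^{n-i}}. \]
   Context: All arithmetic on binary vectors and matrices is in $\mathrm{GF}(2)$. A binary linear code with generating matrix $\mathbf{A}\in\{0,1\}^{n\times k}$ encodes a message $X\in\{0,1\}^k$ as $\mathbf{A}X\in\{0,1\}^n$. Over the binary symmetric channel (BSC) with cross-over probability $\epsilon$, the channel output is $Y=\mathbf{A}X+N$, where $X$ is uniformly distributed on $\{0,1\}^k$ and $N\in\{0,1\}^n$ has i.i.d. Bernoulli$(\epsilon)$ entries (equal to $1$ with probability $\epsilon$), independent of $X$. The decoder, on receiving $Y=y$, outputs a random estimate $\hat X$ drawn from the posterior distribution $\mathbb{P}(X=\cdot\mid Y=y)$. Its probability of correct detection is $p_c(\mathbf{A})=\sum_{x,y}\mathbb{P}(X=x,Y=y)\,\mathbb{P}(X=x\mid Y=y)=\mathbb{E}_{X,Y}\big[\mathbb{P}(X\mid Y)\big]$, and the error probability is $p_e(\mathbf{A})=1-p_c(\mathbf{A})$. The Bernoulli$(n,k,\rho)$ distribution on the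 set $\mathcal{A}_{n\times k}$ of all binary $n\times k$ matrices is the one in which all $nk$ entries are i.i.d. Bernoulli$(\rho)$. *)

(* Defs.v *)
From HB Require Import structures.
From mathcomp Require Import all_boot all_order all_algebra.
Set Implicit Arguments. Unset Strict Implicit. Unset Printing Implicit Defensive.
Import Order.TTheory GRing.Theory Num.Theory.
Local Open Scope ring_scope.

Section BSC.
Variable R : realFieldType.

Definition bern_vec (p : R) (m : nat) (v : 'cV['F_2]_m) : R :=
  \prod_(i < m) (if v i 0 == 0 then 1 - p else p).

Definition bern_mx (rho : R) (n k : nat) (A : 'M['F_2]_(n, k)) : R :=
  \prod_(i < n) \prod_(j < k) (if A i j == 0 then 1 - rho else rho).

(* joint law P(X = x, Y = y) with X uniform, Y = A X + N, N ~ Bern(eps)^n *)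
Definition joint (eps : R) (n k : nat) (A : 'M['F_2]_(n, k))
  (x : 'cV['F_2]_k) (y : 'cV['F_2]_n) : R :=
  (2 ^+ k)^-1 * bern_vec eps (y - A *m x).

Definition marg_Y (eps : R) (n k : nat) (A : 'M['F_2]_(n, k))
  (y : 'cV['F_2]_n) : R :=
  \sum_(x : 'cV['F_2]_k) joint eps A x y.

Definition posterior (eps : R) (n k : nat) (A : 'M['F_2]_(n, k))
  (x : 'cV['F_2]_k) (y : 'cV['F_2]_n) : R :=
  joint eps A x y / marg_Y eps A y.

(* probability of correct detection of the posterior-sampling decoder *)
Definition p_c (eps : R) (n k : nat) (A : 'M['F_2]_(n, k)) : R :=
  \sum_(x : 'cV['F_2]_k) \sum_(y : 'cV['F_2]_n)
     joint eps A x y * posterior eps A x y.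

Definition expected_pc (eps rho : R) (n k : nat) : R :=
  \sum_(A : 'M['F_2]_(n, k)) bern_mx rho A * p_c eps A.

Definition pc_lower_bound (eps rho : R) (n k : nat) : R :=
  \sum_(i < n.+1)
    'C(n, i)%:R * (2 ^+ n * eps ^+ (2 * i) * (1 - eps) ^+ (2 * (n - i)))
    / \sum_(j < k.+1) 'C(k, j)%:R
        * (1 - (1 - 2 * eps) * (1 - 2 * rho) ^+ j) ^+ i
        * (1 + (1 - 2 * eps) * (1 - 2 * rho) ^+ j) ^+ (n - i).

End BSC.

(* Main.v *)
Require Import Defs.
From HB Require Import structures.
From mathcomp Require Import all_boot all_order all_algebra.
Import Order.TTheory GRing.Theory Num.Theory.
Local Open Scope ring_scope.

Set Implicit Arguments. Unset Strict Implicit. Unset Printing Implicit Defensive.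

Lemma F2_cases (x : 'F_2) : x = 0 \/ x = 1.
Proof. case: x => [[|[|m]] Hm] //; [left|right]; exact/eqP. Qed.

Lemma F2_10 : (1 : 'F_2) != 0. Proof. by []. Qed.

Section S.
Variable R : realFieldType.
Definition sg2 (b : 'F_2) : R := if b == 0 then 1 else -1.

Lemma sg2D a b : sg2 (a + b) = sg2 a * sg2 b.
Proof.
by case: (F2_cases a) => ->; case: (F2_cases b) => ->; rewrite /sg2 /= ?mulr1 ?mul1r ?mulrNN ?mulr1.
Qed.

Lemma sg2_sum (I : finType) (F : I -> 'F_2) : sg2 (\sum_i F i) = \prod_i sg2 (F i).
Proof. by apply: (big_morph sg2 sg2D); rewrite /sg2 eqxx. Qed.

Lemma sum_rows m n (G : 'I_m -> 'rV['F_2]_n -> R) :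
  \sum_(A : 'M['F_2]_(m, n)) \prod_i G i (row i A) = \prod_i \sum_r G i r.
Proof.
rewrite bigA_distr_bigA /=.
rewrite (reindex (fun A : 'M['F_2]_(m, n) => [ffun i => row i A])) /=; last first.
  exists (fun f : {ffun 'I_m -> 'rV['F_2]_n} => \matrix_(i, j) f i 0 j) => A _.
    by apply/matrixP => i j; rewrite !mxE ffunE mxE.
  by apply/ffunP => i; rewrite ffunE; apply/matrixP => a j; rewrite !mxE (ord1 a).
by apply: eq_bigr => A _; apply: eq_bigr => i _; rewrite ffunE.
Qed.

Lemma sum_row_prod n (F : 'I_n -> 'F_2 -> R) :
  \sum_(r : 'rV['F_2]_n) \prod_j F j (r 0 j) = \prod_j \sum_b F j b.
Proof.
rewrite bigA_distr_bigA /=.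
rewrite (reindex (fun r : 'rV['F_2]_n => [ffun j => r 0 j])) /=; last first.
  exists (fun f : {ffun 'I_n -> 'F_2} => \row_j f j) => r _.
    by apply/matrixP => i j; rewrite !mxE ffunE (ord1 i).
  by apply/ffunP => j; rewrite ffunE mxE.
by apply: eq_bigr => r _; apply: eq_bigr => i _; rewrite ffunE.
Qed.

Lemma sum_F2 (F : 'F_2 -> R) : \sum_b F b = F 0 + F 1.
Proof.
rewrite (bigD1 0) //= (bigD1 1) //= big1 ?addr0 // => b /andP[b0 b1].
by case: (F2_cases b) b0 b1 => ->.
Qed.

Definition wt m (v : 'cV['F_2]_m) : nat := #|[set i | v i 0 != 0]|.

Lemma prod_wt m (v : 'cV['F_2]_m) (a b : R) :
  \prod_i (if v i 0 == 0 then a else b) = a ^+ (m - wt v) * b ^+ wt v.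
Proof.
rewrite (bigID (fun i => v i 0 == 0)) /=.
have ->: \prod_(i | v i 0 == 0) (if v i 0 == 0 then a else b)
   = \prod_(i in ~: [set i | v i 0 != 0]) a.
  by apply: eq_big => [i|i ->//]; rewrite !inE negbK.
have ->: \prod_(i | v i 0 != 0) (if v i 0 == 0 then a else b)
   = \prod_(i in [set i | v i 0 != 0]) b.
  by apply: eq_big => [i|i /negbTE ->//]; rewrite !inE.
by rewrite !prodr_const cardsCs setCK card_ord /wt.
Qed.

Lemma sum_wt m (F : nat -> R) :
  \sum_(v : 'cV['F_2]_m) F (wt v) = \sum_(i < m.+1) 'C(m, i)%:R * F i.
Proof.
rewrite (reindex (fun S : {set 'I_m} => \col_i (if i \in S then 1 else 0 : 'F_2))) /=; last first.
  exists (fun v : 'cV['F_2]_m => [set i | v i 0 != 0]) => [S _|v _]; last first.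
    apply/matrixP => i j; rewrite (ord1 j) mxE inE.
    by case: (F2_cases (v i 0)) => ->.
  by apply/setP => i; rewrite inE mxE; case: (i \in S).
have wtS (S : {set 'I_m}) : wt (\col_i (if i \in S then 1 else 0 : 'F_2)) = #|S|.
  by rewrite /wt; apply: eq_card => i; rewrite !inE mxE; case: (i \in S).
under eq_bigr do rewrite wtS.
rewrite (partition_big (fun S : {set 'I_m} => inord #|S| : 'I_m.+1) predT) //=.
apply: eq_bigr => i _.
have cS (S : {set 'I_m}) : (#|S| < m.+1)%N by rewrite ltnS; have := max_card (mem S); rewrite card_ord.
rewrite (eq_bigr (fun _ => F i)); last by move=> S /eqP <-; rewrite inordK.
rewrite sumr_const mulrC mulr_natr; congr (_ *+ _).
have := @card_draws (ordinal m) i; rewrite card_ord => <-; apply: eq_card => S; rewrite !inE.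
by rewrite unfold_in /= inordK.
Qed.

End S.

Section S.
Variable R : realFieldType.

Lemma tangent (m d : R) : 0 < m -> 0 < d -> (2 * m - d) / m ^+ 2 <= d^-1.
Proof.
move=> m0 d0.
rewrite ler_pdivrMr ?exprn_gt0 // mulrC ler_pdivlMl // -subr_ge0.
have -> : m ^+ 2 - d * (m * 2 - d) = (m - d) ^+ 2.
  rewrite sqrrB mulrBr opprB mulrA mulr_natr [d * m]mulrC -expr2 addrA addrAC.
  done.
exact: sqr_ge0.
Qed.

Lemma jensen_inv (I : finType) (p d : I -> R) :
  (forall i, 0 <= p i) -> (forall i, 0 < d i) -> \sum_i p i = 1 ->
  (\sum_i p i * d i)^-1 <= \sum_i p i / d i.
Proof.
move=> p0 d0 p1; set m := \sum_i p i * d i.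
have m0 : 0 <= m by apply: sumr_ge0 => i _; rewrite mulr_ge0 // ltW.
have r0 : 0 <= \sum_i p i / d i by apply: sumr_ge0 => i _; rewrite mulr_ge0 // invr_ge0 ltW.
case: (ltrgt0P m) m0 => // [mp _|->]; last by rewrite invr0.
apply: le_trans (_ : \sum_i p i * ((2 * m - d i) / m ^+ 2) <= _); last first.
  by apply: ler_sum => i _; apply: ler_wpM2l => //; apply: tangent.
suff -> : \sum_i p i * ((2 * m - d i) / m ^+ 2) = m^-1 by [].
rewrite (eq_bigr (fun i => (p i * (2 * m) - p i * d i) / m ^+ 2)); last first.
  by move=> i _; rewrite mulrA mulrBr.
rewrite -mulr_suml sumrB -mulr_suml p1 mul1r -/m.
rewrite mulr_natl mulr2n addrK expr2 invfM mulrA mulfV ?mul1r //.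
by rewrite gt_eqF.
Qed.
End S.

Section S.
Variable R : realFieldType.

Lemma card_cV k : #|{: 'cV['F_2]_k}| = (2 ^ k)%N.
Proof. by rewrite card_mx card_Fp // muln1. Qed.

Lemma pc_eq (eps : R) n k (A : 'M['F_2]_(n, k)) :
  p_c eps A = \sum_(z : 'cV['F_2]_n) bern_vec eps z ^+ 2
                / \sum_(w : 'cV['F_2]_k) bern_vec eps (z + A *m w).
Proof.
rewrite /p_c.
set a : R := (2 ^+ k)^-1.
have a0 : a != 0 by rewrite invr_eq0 expf_neq0 // pnatr_eq0.
have inner x : \sum_(y : 'cV['F_2]_n) joint eps A x y * posterior eps A x y
   = a * \sum_(z : 'cV['F_2]_n) bern_vec eps z ^+ 2
                / \sum_(w : 'cV['F_2]_k) bern_vec eps (z + A *m w).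
  rewrite (reindex_inj (addIr (A *m x))) /= mulr_sumr; apply: eq_bigr => z _.
  rewrite /posterior /marg_Y /joint addrK -mulr_sumr.
  rewrite (reindex_inj (can_inj (fun w => subKr x w) : injective (fun w => x - w))) /=.
  under eq_bigr do rewrite mulmxBr opprB addrA addrAC addrK.
  rewrite -/a; move: (bern_vec _ _) (\sum_i _) => b D.
  by rewrite invfM [a * b in X in _ * X]mulrC -[b * a * _]mulrA mulVKf // expr2 -!mulrA.
under eq_bigr do rewrite inner.
rewrite sumr_const card_cV -mulr_natl mulrA.
by rewrite natrX mulfV ?mul1r // expf_neq0 // pnatr_eq0.
Qed.
End S.

Section S.
Variable R : realFieldType.

Lemma eq_div2 (x y : R) : x * 2 = y -> x = y / 2.
Proof. by move=> <-; rewrite mulfK // pnatr_eq0. Qed.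

Lemma bsg (eps : R) (v : 'F_2) :
  (if v == 0 then 1 - eps else eps) = (1 + (1 - 2 * eps) * sg2 R v) / 2.
Proof.
apply: eq_div2; case: (F2_cases v) => ->; rewrite /sg2 /=.
  by rewrite mulr1 mulrBl mul1r mulrC mulr2n addrA.
by rewrite mulrN1 opprB addrC subrK mulrC.
Qed.

Definition Trow (rho : R) k (w : 'cV['F_2]_k) := \prod_j ((1 - rho) + rho * sg2 R (w j 0)).

Lemma EB (eps rho : R) n k (z : 'cV['F_2]_n) (w : 'cV['F_2]_k) :
  \sum_(A : 'M['F_2]_(n, k)) bern_mx rho A * bern_vec eps (z + A *m w)
  = \prod_i ((1 + (1 - 2 * eps) * sg2 R (z i 0) * Trow rho w) / 2).
Proof.
pose f (b : 'F_2) : R := if b == 0 then 1 - rho else rho.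
pose Prow (r : 'rV['F_2]_k) := \prod_j f (r 0 j).
transitivity (\sum_(A : 'M['F_2]_(n, k)) \prod_i (Prow (row i A) *
   (if (z i 0 + \sum_j row i A 0 j * w j 0) == 0 then 1 - eps else eps))).
  apply: eq_bigr => A _; rewrite /bern_mx /bern_vec -big_split /=.
  apply: eq_bigr => i _; congr (_ * _).
    by apply: eq_bigr => j _; rewrite /f mxE.
  by rewrite !mxE; under [X in z i 0 + X]eq_bigr do rewrite mxE.
rewrite (sum_rows (fun i r => Prow r *
   (if (z i 0 + \sum_j r 0 j * w j 0) == 0 then 1 - eps else eps))).
apply: eq_bigr => i _.
under eq_bigr => r _.
  rewrite bsg sg2D sg2_sum mulrA.
  have -> : Prow r * (1 + (1 - 2 * eps) * (sg2 R (z i 0) * \prod_j sg2 R (r 0 j * w j 0)))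
     = Prow r + (1 - 2 * eps) * sg2 R (z i 0) * \prod_j (f (r 0 j) * sg2 R (r 0 j * w j 0)).
    rewrite mulrDr mulr1 big_split /=; congr (_ + _).
    by rewrite -!mulrA mulrCA; congr (_ * _); rewrite mulrCA.
  over.
rewrite -mulr_suml big_split /= -mulr_sumr.
rewrite (sum_row_prod (fun j b => f b)).
rewrite (sum_row_prod (fun j b => f b * sg2 R (b * w j 0))).
rewrite big1; last by move=> j _; rewrite sum_F2 /f /= subrK.
congr ((1 + _ * _) / 2); rewrite /Trow; apply: eq_bigr => j _.
by rewrite sum_F2 /f /= mul0r mul1r /sg2 eqxx mulr1.
Qed.
End S.

Section S.
Variable R : realFieldType.

Lemma Trow_wt (rho : R) k (w : 'cV['F_2]_k) : Trow rho w = (1 - 2 * rho) ^+ wt w.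
Proof.
rewrite /Trow (eq_bigr (fun j => if w j 0 == 0 then 1 else 1 - 2 * rho)).
  by rewrite prod_wt expr1n mul1r.
move=> j _; case: (F2_cases (w j 0)) => ->; rewrite /sg2 /=.
  by rewrite mulr1 subrK.
by rewrite mulrN1 mulr2n mulrDl mul1r opprD addrA.
Qed.

Lemma prod_half (c X : R) n (z : 'cV['F_2]_n) :
  \prod_i ((1 + c * sg2 R (z i 0) * X) / 2)
  = ((1 + c * X) / 2) ^+ (n - wt z) * ((1 - c * X) / 2) ^+ wt z.
Proof.
rewrite -prod_wt; apply: eq_bigr => i _.
case: (F2_cases (z i 0)) => ->; rewrite /sg2 /= ?mulr1 //.
by rewrite mulrN1 mulNr.
Qed.

Lemma bern_vec_gt0 (eps : R) n (v : 'cV['F_2]_n) : 0 < eps -> eps < 1 -> 0 < bern_vec eps v.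
Proof.
move=> e0 e1; apply: prodr_gt0 => i _; case: ifP => _ //.
by rewrite subr_gt0.
Qed.

Lemma bern_mx_ge0 (rho : R) n k (A : 'M['F_2]_(n, k)) : 0 <= rho -> rho <= 1 -> 0 <= bern_mx rho A.
Proof.
move=> r0 r1; apply: prodr_ge0 => i _; apply: prodr_ge0 => j _; case: ifP => _ //.
by rewrite subr_ge0.
Qed.

Lemma bern_mx_sum1 (rho : R) n k : \sum_(A : 'M['F_2]_(n, k)) bern_mx rho A = 1.
Proof.
pose f (b : 'F_2) : R := if b == 0 then 1 - rho else rho.
transitivity (\sum_(A : 'M['F_2]_(n, k)) \prod_i \prod_j f (row i A 0 j)).
  by apply: eq_bigr => A _; apply: eq_bigr => i _; apply: eq_bigr => j _; rewrite mxE.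
rewrite (sum_rows (fun i r => \prod_j f (r 0 j))) big1 // => i _.
rewrite (sum_row_prod (fun j b => f b)) big1 // => j _.
by rewrite sum_F2 /f /= subrK.
Qed.

End S.

Unset Implicit Arguments.

Theorem theorem1 (R : realFieldType) (eps rho : R) (n k : nat)
  (heps0 : 0 < eps) (heps1 : eps < 1) (hrho0 : 0 < rho) (hrho1 : rho < 1)
  (hk : (1 <= k)%N) (hkn : (k <= n)%N) :
  pc_lower_bound eps rho n k <= expected_pc eps rho n k.
Proof.
rewrite /expected_pc.
under eq_bigr do rewrite pc_eq mulr_sumr.
rewrite exchange_big /=.
set c := 1 - 2 * eps; set r' := 1 - 2 * rho.
set D := fun z : 'cV['F_2]_n => \sum_(A : 'M['F_2]_(n, k)) bern_mx rho A
            * \sum_(w : 'cV['F_2]_k) bern_vec eps (z + A *m w).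
apply: le_trans (_ : _ <= \sum_z bern_vec eps z ^+ 2 * (D z)^-1) _; last first.
  apply: ler_sum => z _.
  rewrite (eq_bigr (fun A => bern_vec eps z ^+ 2 *
     (bern_mx rho A / \sum_w bern_vec eps (z + A *m w)))); last first.
    by move=> A _; rewrite mulrCA.
  rewrite -mulr_sumr; apply: ler_wpM2l; first exact: sqr_ge0.
  apply: jensen_inv.
  - by move=> A; apply: bern_mx_ge0; rewrite ?ltW.
  - move=> A; rewrite (bigD1 0) //=.
    apply: (lt_le_trans (bern_vec_gt0 (z + A *m 0) heps0 heps1)); rewrite lerDl.
    by apply: sumr_ge0 => w _; apply: ltW; apply: bern_vec_gt0.
  - exact: bern_mx_sum1.
have HD z : D z = \sum_(j < k.+1) 'C(k, j)%:R *
    (((1 + c * r' ^+ j) / 2) ^+ (n - wt z) * ((1 - c * r' ^+ j) / 2) ^+ wt z).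
  rewrite /D; under eq_bigr do rewrite mulr_sumr.
  rewrite exchange_big /=.
  under eq_bigr do rewrite EB prod_half Trow_wt.
  exact: (@sum_wt R k (fun j : nat => ((1 + c * r' ^+ j) / 2) ^+ (n - wt z) * ((1 - c * r' ^+ j) / 2) ^+ wt z)).
under [X in _ <= X]eq_bigr do rewrite HD /bern_vec prod_wt.
rewrite (@sum_wt R n (fun i : nat => ((1 - eps) ^+ (n - i) * eps ^+ i) ^+ 2 *
   (\sum_(j < k.+1) 'C(k, j)%:R *
    (((1 + c * r' ^+ j) / 2) ^+ (n - i) * ((1 - c * r' ^+ j) / 2) ^+ i))^-1)).
rewrite /pc_lower_bound le_eqVlt; apply/orP; left; apply/eqP.
apply: eq_bigr => i _.
have hi : (i <= n)%N by rewrite -ltnS.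
rewrite /c /r'.
set a := fun j : nat => 1 - (1 - 2 * eps) * (1 - 2 * rho) ^+ j.
set b := fun j : nat => 1 + (1 - 2 * eps) * (1 - 2 * rho) ^+ j.
have HS : \sum_(j < k.+1) 'C(k, j)%:R * ((b j / 2) ^+ (n - i) * (a j / 2) ^+ i)
   = (\sum_(j < k.+1) 'C(k, j)%:R * a j ^+ i * b j ^+ (n - i)) / 2 ^+ n.
  rewrite mulr_suml; apply: eq_bigr => j _.
  rewrite !expr_div_n mulf_div -exprD subnK // [X in _ * (X / _)]mulrC !mulrA.
  done.
rewrite HS invf_div exprMn -!exprM [((n - i) * 2)%N]mulnC [(i * 2)%N]mulnC.
rewrite !mulrA; congr (_ * _); rewrite -!mulrA; congr (_ * _).
by rewrite mulrC [eps ^+ _ * _]mulrC -mulrA.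
Qed.
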